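(* Let $\{\alpha(t)\}_{t\ge 0}$ be any non-negative, non-increasing stepsize sequence and $\eta>0$, and run the distributed regularized primal-dual algorithm described in the context. Then for every $T\in\mathbb{N}$ and every agent $i\in\{1,\dots,n\}$, \[ f(\widehat{x}_{i}(T))-f(x_{\ast})\leq \frac{1}{\sum_{t=0}^{T-1}\alpha(t)}\Bigg[\frac{1}{2}\|x_{\ast}\|^{2} +\frac{L}{n}\sum_{t=0}^{T-1}\sum_{j=1}^{n}\alpha(t)\|x_{i}(t)-x_{j}(t)\|-\frac{\eta}{2n}\sum_{t=0}^{T-1}\sum_{j=1}^{n}\alpha(t)\|\lambda_{j}(t)\|^{2} +\frac{1}{2n}\sum_{t=0}^{T-1}\sum_{j=1}^{n}\alpha^{2}(t)\Big(\|\nabla_{x}L_{j}(x_{j}(t),\lambda_{j}(t))\|^{2}+\|\nabla_{\lambda}L_{j}(x_{j}(t),\lambda_{j}(t))\|^{2}\Big)\Bigg]. \]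
   Context: Norms are Euclidean. Problem: minimize $f(x)=\frac1n\sum_{i=1}^n f_i(x)$ over $\mathcal{X}=\{x\in\mathbb{R}^d: g_k(x)\le 0,\ k=1,\dots,m\}$; write $g=(g_1,\dots,g_m)^T$. Assumptions: $\mathcal{X}$ is non-empty, convex and compact; $R$ is the smallest radius with $\mathcal{X}\subseteq \mathbb{B}_d(R)=\{x:\|x\|\le R\}$; there is a Slater vector $\tilde x$ with $g_k(\tilde x)<0$ for all $k$; all $f_i$ and $g_k$ are convex on $\mathbb{B}_d(R)$ and all their subgradients there satisfy $\|\nabla f_i(x)\|\le L$, $\|\nabla g_k(x)\|\le L$. $x_\ast$ denotes an optimal solution. Agents $1,\dots,n$ are nodes of a connected graph $G=(V,E)$; $W\in\mathbb{R}^{n\times n}$ is doubly stochastic with $W_{ij}>0$ if $(i,j)\in E$ and $W_{ij}=0$ if $(i,j)\notin E$. Regularized Lagrangian of agent $i$: $L_i(x,\lambda)=f_i(x)+\langle\lambda,g(x)\rangle-\frac{\eta}{2}\|\lambda\|^2$, with subgradients $\nabla_xL_i(x,\lambda)=\nabla f_i(x)+\sum_{k=1}^m\lambda_k\nabla g_k(x)$ and $\nabla_\lambda L_i(x,\lambda)=g(x)-\eta\lambda$ (for subgradients $\nabla f_i(x)\in\partial f_i(x)$, $\nabla g_k(x)\in\partial g_k(x)$). Algorithm: $x_i(0)=0\in\mathbb{R}^d$, $\lambda_i(0)=0\in\mathbb{R}^m$; for $t=0,1,2,\dots$: $y_i(t)=x_i(t)-\alpha(t)\nabla_xL_i(x_i(t),\lambda_i(t))$,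 $\gamma_i(t)=\lambda_i(t)+\alpha(t)\nabla_\lambda L_i(x_i(t),\lambda_i(t))$, $x_i(t+1)=\Pi_{\mathbb{B}_d(R)}(\sum_j W_{ij}y_j(t))$, $\lambda_i(t+1)=\Pi_{\mathbb{R}^m_+}(\sum_jW_{ij}\gamma_j(t))$, where $\Pi$ denotes Euclidean projection. The estimate is $\widehat{x}_i(T)=\sum_{t=0}^{T-1}\alpha(t)x_i(t)/\sum_{t=0}^{T-1}\alpha(t)$. *)

(* Defs.v *)
From HB Require Import structures.
From mathcomp Require Import all_boot all_order all_algebra.
From mathcomp Require Import all_classical all_reals all_analysis.
Set Implicit Arguments. Unset Strict Implicit. Unset Printing Implicit Defensive.
Import Order.TTheory GRing.Theory Num.Theory.
Import numFieldNormedType.Exports.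
Local Open Scope ring_scope.
Local Open Scope classical_set_scope.

Section Defs.
Variable R : realType.

Definition dotv (d : nat) (u v : 'rV[R]_d) : R := \sum_(k < d) u 0 k * v 0 k.
Definition enorm (d : nat) (u : 'rV[R]_d) : R := Num.sqrt (dotv u u).

Definition eball (d : nat) (r : R) : set 'rV[R]_d := [set x | enorm x <= r].

Definition orthant (m : nat) : set 'rV[R]_m := [set x | forall k, 0 <= x 0 k].

Definition convex_setE (d : nat) (C : set 'rV[R]_d) : Prop :=
  forall x y t, C x -> C y -> 0 <= t <= 1 -> C (t *: x + (1 - t) *: y).

Definition convex_fun_on (d : nat) (C : set 'rV[R]_d) (h : 'rV[R]_d -> R) : Prop :=
  forall x y t, C x -> C y -> 0 <= t <= 1 ->
    h (t *: x + (1 - t) *: y) <= t * h x + (1 - t) * h y.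

Definition subgrad (d : nat) (h : 'rV[R]_d -> R) (x v : 'rV[R]_d) : Prop :=
  forall y, h x + dotv v (y - x) <= h y.

Definition is_proj (d : nat) (C : set 'rV[R]_d) (y p : 'rV[R]_d) : Prop :=
  C p /\ forall z, C z -> enorm (p - y) <= enorm (z - y).

Definition feas (d m : nat) (g : 'I_m -> 'rV[R]_d -> R) : set 'rV[R]_d :=
  [set x | forall k, g k x <= 0].

Definition favg (d n : nat) (f : 'I_n -> 'rV[R]_d -> R) (x : 'rV[R]_d) : R :=
  n%:R^-1 * \sum_(i < n) f i x.

Definition gvec (d m : nat) (g : 'I_m -> 'rV[R]_d -> R) (x : 'rV[R]_d) : 'rV[R]_m :=
  \row_k g k x.

(* subgradients of the regularized Lagrangian L_j, given the chosen
   subgradients df j x \in \partial f_j(x), dg k x \in \partial g_k(x) *)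
Definition gradxL (d m n : nat) (df : 'I_n -> 'rV[R]_d -> 'rV[R]_d)
  (dg : 'I_m -> 'rV[R]_d -> 'rV[R]_d) (j : 'I_n) (x : 'rV[R]_d) (lam : 'rV[R]_m)
  : 'rV[R]_d := df j x + \sum_(k < m) lam 0 k *: dg k x.

Definition gradlamL (d m : nat) (g : 'I_m -> 'rV[R]_d -> R) (eta : R)
  (x : 'rV[R]_d) (lam : 'rV[R]_m) : 'rV[R]_m := gvec g x - eta *: lam.

Definition xhat (d n : nat) (alpha : nat -> R) (x : 'I_n -> nat -> 'rV[R]_d)
  (i : 'I_n) (T : nat) : 'rV[R]_d :=
  (\sum_(t < T) alpha t)^-1 *: \sum_(t < T) alpha t *: x i t.

End Defs.

(* Main.v *)
Require Import Defs.
From HB Require Import structures.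
From mathcomp Require Import all_boot all_order all_algebra.
From mathcomp Require Import all_classical all_reals all_analysis.
Import Order.TTheory GRing.Theory Num.Theory.
Import numFieldNormedType.Exports.
Local Open Scope ring_scope.
Local Open Scope classical_set_scope.
From mathcomp Require Import ring lra.

Section Helpers.
Local Set Implicit Arguments.
Local Unset Strict Implicit.
Variable R : realType.
Implicit Types d : nat.

Lemma dotvC d (u v : 'rV[R]_d) : dotv u v = dotv v u.
Proof. by apply: eq_bigr => k _; rewrite mulrC. Qed.

Lemma sq_ge0 d (u : 'rV[R]_d) : 0 <= dotv u u.
Proof. by apply: sumr_ge0 => k _; rewrite -expr2 sqr_ge0. Qed.

Lemma enorm_sq d (u : 'rV[R]_d) : enorm u ^+ 2 = dotv u u.
Proof. by rewrite /enorm sqr_sqrtr // sq_ge0. Qed.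

Lemma enorm_ge0 d (u : 'rV[R]_d) : 0 <= enorm u.
Proof. exact: sqrtr_ge0. Qed.

Lemma dotvDl d (u w v : 'rV[R]_d) : dotv (u + w) v = dotv u v + dotv w v.
Proof. by rewrite /dotv -big_split; apply: eq_bigr => k _; rewrite !mxE mulrDl. Qed.

Lemma dotvZl d a (u v : 'rV[R]_d) : dotv (a *: u) v = a * dotv u v.
Proof. by rewrite /dotv mulr_sumr; apply: eq_bigr => k _; rewrite !mxE mulrA. Qed.

Lemma dotvNl d (u v : 'rV[R]_d) : dotv (- u) v = - dotv u v.
Proof. by rewrite /dotv -sumrN; apply: eq_bigr => k _; rewrite !mxE mulNr. Qed.

Lemma dotv0l d (v : 'rV[R]_d) : dotv 0 v = 0.
Proof. by rewrite /dotv big1 // => k _; rewrite mxE mul0r. Qed.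

Lemma dotvBl d (u w v : 'rV[R]_d) : dotv (u - w) v = dotv u v - dotv w v.
Proof. by rewrite dotvDl dotvNl. Qed.

Lemma dotvDr d (u w v : 'rV[R]_d) : dotv v (u + w) = dotv v u + dotv v w.
Proof. by rewrite !(dotvC v) dotvDl. Qed.
Lemma dotvZr d a (u v : 'rV[R]_d) : dotv v (a *: u) = a * dotv v u.
Proof. by rewrite !(dotvC v) dotvZl. Qed.
Lemma dotvNr d (u v : 'rV[R]_d) : dotv v (- u) = - dotv v u.
Proof. by rewrite !(dotvC v) dotvNl. Qed.
Lemma dotvBr d (u w v : 'rV[R]_d) : dotv v (u - w) = dotv v u - dotv v w.
Proof. by rewrite !(dotvC v) dotvBl. Qed.
Lemma dotv0r d (v : 'rV[R]_d) : dotv v 0 = 0.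
Proof. by rewrite dotvC dotv0l. Qed.

Lemma dotv_suml d (I : Type) (r : seq I) (P : pred I) (F : I -> 'rV[R]_d) v :
  dotv (\sum_(j <- r | P j) F j) v = \sum_(j <- r | P j) dotv (F j) v.
Proof. exact: (big_morph (fun u => dotv u v) (fun a b => dotvDl a b v) (dotv0l v)). Qed.

Lemma dotv_sumr d (I : Type) (r : seq I) (P : pred I) (F : I -> 'rV[R]_d) v :
  dotv v (\sum_(j <- r | P j) F j) = \sum_(j <- r | P j) dotv v (F j).
Proof. by rewrite dotvC dotv_suml; apply: eq_bigr => j _; rewrite dotvC. Qed.

Lemma sq_addZ d (u v : 'rV[R]_d) s :
  dotv (u + s *: v) (u + s *: v) = dotv u u + 2 * s * dotv u v + s ^+ 2 * dotv v v.
Proof. rewrite !dotvDl !dotvDr !dotvZl !dotvZr (dotvC v u); ring. Qed.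

Lemma sq_subZ d (u v : 'rV[R]_d) s :
  dotv (u - s *: v) (u - s *: v) = dotv u u - 2 * s * dotv u v + s ^+ 2 * dotv v v.
Proof. rewrite -scaleNr sq_addZ; ring. Qed.

Lemma CS d (u v : 'rV[R]_d) : dotv u v <= enorm u * enorm v.
Proof.
set a := dotv v v; set b := dotv u v; set c := dotv u u.
have Hq s : 0 <= c - 2 * s * b + s ^+ 2 * a.
  by rewrite -sq_subZ sq_ge0.
have Ha : 0 <= a by apply: sq_ge0.
have Hb2 : b ^+ 2 <= a * c.
  have [a0|apos] := eqVneq a 0.
    have [b0|bn0] := eqVneq b 0.
      by rewrite b0 a0; lra.
    have := Hq ((c + 1) / (2 * b)).
    have -> : c - 2 * ((c + 1) / (2 * b)) * b + ((c + 1) / (2 * b)) ^+ 2 * a = -1.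
      by rewrite a0; field; rewrite bn0.
    lra.
  have := Hq (b / a).
  have -> : c - 2 * (b / a) * b + (b / a) ^+ 2 * a = (a * c - b ^+ 2) / a.
    by field.
  have ap : 0 < a by rewrite lt_def apos Ha.
  by rewrite pmulr_lge0 ?invr_gt0 // subr_ge0.
have Heu := enorm_sq u; have Hev := enorm_sq v.
have := enorm_ge0 u; have := enorm_ge0 v.
rewrite -/a -/c in Heu Hev.
move: (enorm u) (enorm v) Heu Hev => eu ev Heu Hev H1 H2.
have HP : (eu * ev) ^+ 2 = a * c by rewrite exprMn Heu Hev mulrC.
have HP0 : 0 <= eu * ev by apply: mulr_ge0.
move: (eu * ev) HP HP0 => P HP HP0.
have [//|Hlt] := leP b P.
have : P ^+ 2 < b ^+ 2.
  rewrite !expr2; apply: (le_lt_trans (y := P * b)).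
    by apply: ler_wpM2l => //; apply: ltW.
  by rewrite ltr_pM2r //; apply: le_lt_trans Hlt.
lra.
Qed.

Lemma scalar_jensen (I : finType) (w a : I -> R) :
  (forall j, 0 <= w j) -> \sum_j w j = 1 ->
  (\sum_j w j * a j) ^+ 2 <= \sum_j w j * a j ^+ 2.
Proof.
move=> Hw0 Hw; set m := \sum_j w j * a j.
have H : \sum_j w j * (a j - m) ^+ 2 = \sum_j w j * a j ^+ 2 - m ^+ 2.
  rewrite (eq_bigr (fun j => w j * a j ^+ 2 - (2 * m) * (w j * a j) + m ^+ 2 * w j)); last first.
    by move=> j _; ring.
  rewrite big_split /= sumrB -!mulr_sumr Hw -/m; ring.
have : 0 <= \sum_j w j * (a j - m) ^+ 2.
  by apply: sumr_ge0 => j _; apply: mulr_ge0 => //; apply: sqr_ge0.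
rewrite H; lra.
Qed.

Lemma vec_jensen d (I : finType) (w : I -> R) (v : I -> 'rV[R]_d) :
  (forall j, 0 <= w j) -> \sum_j w j = 1 ->
  dotv (\sum_j w j *: v j) (\sum_j w j *: v j) <= \sum_j w j * dotv (v j) (v j).
Proof.
move=> Hw0 Hw.
apply: (le_trans (y := \sum_k \sum_j w j * (v j 0 k) ^+ 2)).
  apply: ler_sum => k _; rewrite summxE -expr2.
  under eq_bigr do rewrite mxE.
  exact: scalar_jensen.
rewrite exchange_big /= le_eqVlt; apply/orP; left; apply/eqP; apply: eq_bigr => j _.
by rewrite /dotv mulr_sumr; apply: eq_bigr => k _; rewrite expr2.
Qed.

Lemma sq_conv d (z p : 'rV[R]_d) t :
  dotv (t *: z + (1 - t) *: p) (t *: z + (1 - t) *: p) =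
  t * dotv z z + (1 - t) * dotv p p - t * (1 - t) * dotv (z - p) (z - p).
Proof.
rewrite !dotvDl !dotvDr ?dotvNl ?dotvNr !dotvZl !dotvZr (dotvC p z); ring.
Qed.

Definition convC d (C : set 'rV[R]_d) :=
  forall z p t, C z -> C p -> 0 <= t <= 1 -> C (t *: z + (1 - t) *: p).

Lemma proj_nonexp d (C : set 'rV[R]_d) y p z :
  convC C -> is_proj C y p -> C z ->
  dotv (p - z) (p - z) <= dotv (y - z) (y - z).
Proof.
move=> HC [Cp Hmin] Cz.
set a := dotv (p - y) (z - p); set b := dotv (z - p) (z - p).
have Hb : 0 <= b by apply: sq_ge0.
have Hs s : 0 < s -> s <= 1 -> 0 <= 2 * a + s * b.
  move=> s0 s1.
  have Cq := HC z p s Cz Cp (introT andP (conj (ltW s0) s1)).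
  have := Hmin _ Cq.
  rewrite /enorm ler_sqrt ?sq_ge0 //.
  have -> : s *: z + (1 - s) *: p - y = (p - y) + s *: (z - p).
    by apply/rowP => k; rewrite !mxE; ring.
  rewrite sq_addZ -/a -/b => H.
  have H2 : 0 <= s * (2 * a + s * b) by lra.
  by rewrite pmulr_rge0 in H2.
have Ha : 0 <= a.
  rewrite leNgt; apply/negP => Han.
  have bpos : 0 < b - a by lra.
  have hs0 : 0 < - a / (b - a) by apply: divr_gt0 => //; lra.
  have hs1 : - a / (b - a) <= 1 by rewrite ler_pdivrMr // mul1r; lra.
  have H1 := Hs _ hs0 hs1.
  have Hpos : 0 < (b - 2 * a) / (b - a) by apply: divr_gt0 => //; lra.
  have Heq : 2 * a + (- a / (b - a)) * b = a * ((b - 2 * a) / (b - a)).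
    by field; apply/eqP; lra.
  rewrite Heq in H1; nra.
have -> : y - z = (p - z) - 1 *: (p - y) by apply/rowP => k; rewrite !mxE; ring.
rewrite sq_subZ.
have -> : dotv (p - z) (p - y) = - a.
  by rewrite /a dotvC -dotvNr opprB.
have := sq_ge0 (p - y); lra.
Qed.

Lemma ball_conv d Rad : 0 <= Rad -> convC (@eball R d Rad).
Proof.
move=> HR z p t; rewrite /eball /= => Hz Hp /andP[t0 t1].
have Hsq (u : 'rV[R]_d) : (enorm u <= Rad) = (dotv u u <= Rad ^+ 2).
  by rewrite -enorm_sq; apply/idP/idP => H;
    [apply: lerXn2r; rewrite ?nnegrE ?enorm_ge0 | rewrite -(ler_pXn2r (n:=2)) ?nnegrE ?enorm_ge0].
rewrite Hsq in Hz; rewrite Hsq in Hp; rewrite Hsq sq_conv.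
have := sq_ge0 (z - p); have := sq_ge0 z; have := sq_ge0 p.
have t1' : 0 <= 1 - t by lra.
move=> h1 h2 h3.
have e1 : t * dotv z z <= t * Rad ^+ 2 by apply: ler_wpM2l.
have e2 : (1 - t) * dotv p p <= (1 - t) * Rad ^+ 2 by apply: ler_wpM2l.
have e3 : 0 <= t * (1 - t) * dotv (z - p) (z - p) by rewrite !mulr_ge0.
lra.
Qed.

Lemma ball_sq d Rad (u : 'rV[R]_d) : 0 <= Rad -> (enorm u <= Rad) = (dotv u u <= Rad ^+ 2).
Proof.
move=> HR.
by rewrite -enorm_sq; apply/idP/idP => H;
    [apply: lerXn2r; rewrite ?nnegrE ?enorm_ge0 | rewrite -(ler_pXn2r (n:=2)) ?nnegrE ?enorm_ge0].
Qed.

Lemma orth_conv m : convC (@orthant R m).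
Proof.
move=> z p t Hz Hp /andP[t0 t1] k; rewrite !mxE.
apply: addr_ge0; apply: mulr_ge0 => //.
all: try lra.
Qed.

Lemma consensus d n (W : 'M[R]_n) (C : set 'rV[R]_d) (y p : 'I_n -> 'rV[R]_d) z :
  (forall i j, 0 <= W i j) -> (forall i, \sum_(j < n) W i j = 1) ->
  (forall j, \sum_(i < n) W i j = 1) ->
  convC C -> C z -> (forall i, is_proj C (\sum_(j < n) W i j *: y j) (p i)) ->
  \sum_(i < n) dotv (p i - z) (p i - z) <= \sum_(j < n) dotv (y j - z) (y j - z).
Proof.
move=> HW0 Hrow Hcol HC Cz Hp.
apply: (le_trans (y := \sum_(i < n) \sum_(j < n) W i j * dotv (y j - z) (y j - z))).
  apply: ler_sum => i _.
  apply: le_trans (proj_nonexp HC (Hp i) Cz) _.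
  have -> : \sum_(j < n) W i j *: y j - z = \sum_(j < n) W i j *: (y j - z).
    under [RHS]eq_bigr do rewrite scalerBr.
    by rewrite sumrB -scaler_suml Hrow scale1r.
  exact: vec_jensen.
rewrite exchange_big /= le_eqVlt; apply/orP; left; apply/eqP.
by apply: eq_bigr => j _; rewrite -mulr_suml Hcol mul1r.
Qed.

End Helpers.

Theorem lemma1 (R : realType) (d m n : nat)
  (f : 'I_n -> 'rV[R]_d -> R) (g : 'I_m -> 'rV[R]_d -> R)
  (Rad L eta : R) (E : rel 'I_n) (W : 'M[R]_n)
  (df : 'I_n -> 'rV[R]_d -> 'rV[R]_d) (dg : 'I_m -> 'rV[R]_d -> 'rV[R]_d)
  (alpha : nat -> R) (x : 'I_n -> nat -> 'rV[R]_d) (lam : 'I_n -> nat -> 'rV[R]_m)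
  (xstar : 'rV[R]_d)
  (* feasible set: nonempty, convex, compact *)
  (HXne : exists x0, feas g x0)
  (HXconv : convex_setE (feas g))
  (HXcpt : compact (feas g))
  (* Rad is the smallest radius with X contained in B_d(Rad) *)
  (HRin : feas g `<=` eball Rad)
  (HRmin : forall r, feas g `<=` eball r -> Rad <= r)
  (* Slater vector *)
  (HSlater : exists xt, forall k, g k xt < 0)
  (* convexity on the ball *)
  (Hfconv : forall i, convex_fun_on (eball Rad) (f i))
  (Hgconv : forall k, convex_fun_on (eball Rad) (g k))
  (* all subgradients on the ball are bounded by L *)
  (HfL : forall i y v, eball Rad y -> subgrad (f i) y v -> enorm v <= L)
  (HgL : forall k y v, eball Rad y -> subgrad (g k) y v -> enorm v <= L)
  (* the subgradients used by the algorithm *)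
  (Hdf : forall i y, eball Rad y -> subgrad (f i) y (df i y))
  (Hdg : forall k y, eball Rad y -> subgrad (g k) y (dg k y))
  (* x* is an optimal solution *)
  (Hxs : feas g xstar)
  (Hopt : forall y, feas g y -> favg f xstar <= favg f y)
  (* connected (undirected) graph *)
  (HEsym : symmetric E)
  (HEconn : forall i j, connect E i j)
  (* W doubly stochastic, adapted to the graph *)
  (HWnn : forall i j, 0 <= W i j)
  (HWrow : forall i, \sum_(j < n) W i j = 1)
  (HWcol : forall j, \sum_(i < n) W i j = 1)
  (HWE : forall i j, E i j -> 0 < W i j)
  (HWnE : forall i j, ~~ E i j -> W i j = 0)
  (* stepsizes and regularization *)
  (Halpha0 : forall t, 0 <= alpha t)
  (Halpha_noninc : forall t, alpha t.+1 <= alpha t)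
  (Heta : 0 < eta)
  (* the algorithm *)
  (Hx0 : forall i, x i 0%N = 0)
  (Hlam0 : forall i, lam i 0%N = 0)
  (Hxstep : forall i t, is_proj (eball Rad)
       (\sum_(j < n) W i j *: (x j t - alpha t *: gradxL df dg j (x j t) (lam j t)))
       (x i t.+1))
  (Hlamstep : forall i t, is_proj (@orthant R m)
       (\sum_(j < n) W i j *: (lam j t + alpha t *: gradlamL g eta (x j t) (lam j t)))
       (lam i t.+1))
  (T : nat) (i : 'I_n)
  (* the estimate hat x_i(T) is well defined *)
  (HT : 0 < \sum_(t < T) alpha t) :
  favg f (xhat alpha x i T) - favg f xstar <=
  (\sum_(t < T) alpha t)^-1 *
  ( 2^-1 * enorm xstar ^+ 2
  + L / n%:R * \sum_(t < T) \sum_(j < n) alpha t * enorm (x i t - x j t)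
  - eta / (2 * n%:R) * \sum_(t < T) \sum_(j < n) alpha t * enorm (lam j t) ^+ 2
  + (2 * n%:R)^-1 * \sum_(t < T) \sum_(j < n) alpha t ^+ 2 *
      (enorm (gradxL df dg j (x j t) (lam j t)) ^+ 2
       + enorm (gradlamL g eta (x j t) (lam j t)) ^+ 2)).
Proof.
have HR0 : 0 <= Rad.
  by case: HXne => x0 /HRin; rewrite /eball /= => H; exact: le_trans (enorm_ge0 x0) H.
have Hxb : forall j t, eball Rad (x j t).
  move=> j [|t]; last by case: (Hxstep j t).
  by rewrite Hx0 /eball /= /enorm dotv0l sqrtr0.
have Hlo : forall j t, orthant (lam j t).
  move=> j [|t]; last by case: (Hlamstep j t).
  by rewrite Hlam0 => k; rewrite mxE.
have Hxsb : eball Rad xstar by apply: HRin.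
have Hj : forall j t,
  dotv (x j t - alpha t *: gradxL df dg j (x j t) (lam j t) - xstar)
       (x j t - alpha t *: gradxL df dg j (x j t) (lam j t) - xstar)
  + dotv (lam j t + alpha t *: gradlamL g eta (x j t) (lam j t))
         (lam j t + alpha t *: gradlamL g eta (x j t) (lam j t))
  + (2 * alpha t) * (f j (x j t) - f j xstar)
  + (2 * alpha t * eta) * dotv (lam j t) (lam j t)
  <= (dotv (x j t - xstar) (x j t - xstar) + dotv (lam j t) (lam j t))
     + alpha t ^+ 2 * (dotv (gradxL df dg j (x j t) (lam j t)) (gradxL df dg j (x j t) (lam j t))
                      + dotv (gradlamL g eta (x j t) (lam j t)) (gradlamL g eta (x j t) (lam j t))).
  move=> j t.
  set G := gradxL df dg j (x j t) (lam j t).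
  set H := gradlamL g eta (x j t) (lam j t).
  have -> : x j t - alpha t *: G - xstar = (x j t - xstar) - alpha t *: G.
    by apply/rowP => k; rewrite !mxE; ring.
  rewrite sq_subZ sq_addZ.
  have key2 : dotv (lam j t) H = dotv (lam j t) (gvec g (x j t)) - eta * dotv (lam j t) (lam j t).
    by rewrite /H /gradlamL dotvBr dotvZr.
  have key1 : f j (x j t) - f j xstar + dotv (lam j t) (gvec g (x j t)) <= dotv (x j t - xstar) G.
    rewrite /G /gradxL dotvDr dotv_sumr.
    have h1 := Hdf j (x j t) (Hxb j t) xstar.
    rewrite -opprB dotvNr dotvC in h1.
    have h2 : dotv (lam j t) (gvec g (x j t)) <=
        \sum_(k < m) dotv (x j t - xstar) (lam j t 0 k *: dg k (x j t)).
      have -> : dotv (lam j t) (gvec g (x j t)) = \sum_(k < m) lam j t 0 k * g k (x j t).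
        by apply: eq_bigr => k _; rewrite mxE.
      apply: ler_sum => k _; rewrite dotvZr; apply: ler_wpM2l; first exact: Hlo.
      have h3 := Hdg k (x j t) (Hxb j t) xstar.
      rewrite -opprB dotvNr dotvC in h3.
      have := Hxs k; lra.
    lra.
  have Ha := Halpha0 t.
  rewrite key2.
  have : 0 <= alpha t * (dotv (x j t - xstar) G - (f j (x j t) - f j xstar + dotv (lam j t) (gvec g (x j t)))).
    by apply: mulr_ge0 => //; lra.
  nra.
pose Dt t := \sum_(j < n) (dotv (x j t - xstar) (x j t - xstar) + dotv (lam j t) (lam j t)).
have Hstep : forall t, Dt t.+1
   + 2 * alpha t * \sum_(j < n) (f j (x j t) - f j xstar)
   + 2 * alpha t * eta * \sum_(j < n) dotv (lam j t) (lam j t)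
   <= Dt t + alpha t ^+ 2 * \sum_(j < n)
        (dotv (gradxL df dg j (x j t) (lam j t)) (gradxL df dg j (x j t) (lam j t))
       + dotv (gradlamL g eta (x j t) (lam j t)) (gradlamL g eta (x j t) (lam j t))).
  move=> t.
  have C1 := consensus HWnn HWrow HWcol (ball_conv HR0) Hxsb (fun l => Hxstep l t).
  have C0 : orthant (0 : 'rV[R]_m) by move=> k; rewrite mxE.
  have C2 := consensus HWnn HWrow HWcol (@orth_conv R m) C0 (fun l => Hlamstep l t).
  have e1 : \sum_(l < n) dotv (lam l t.+1 - 0) (lam l t.+1 - 0) = \sum_(l < n) dotv (lam l t.+1) (lam l t.+1).
    by apply: eq_bigr => l _; rewrite subr0.
  have e2 : \sum_(l < n) dotv (lam l t + alpha t *: gradlamL g eta (x l t) (lam l t) - 0)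
     (lam l t + alpha t *: gradlamL g eta (x l t) (lam l t) - 0) =
     \sum_(l < n) dotv (lam l t + alpha t *: gradlamL g eta (x l t) (lam l t))
     (lam l t + alpha t *: gradlamL g eta (x l t) (lam l t)).
    by apply: eq_bigr => l _; rewrite subr0.
  rewrite e1 e2 in C2.
  have S := ler_sum (index_enum 'I_n) (P := xpredT) (fun j _ => Hj j t).
  rewrite !big_split /= -!mulr_sumr !big_split /= in S.
  rewrite /Dt !big_split /=.
  lra.
have Htel : forall T', Dt T'
   + 2 * (\sum_(t < T') alpha t * \sum_(j < n) (f j (x j t) - f j xstar))
   + 2 * eta * (\sum_(t < T') alpha t * \sum_(j < n) dotv (lam j t) (lam j t))
   <= Dt 0%N + \sum_(t < T') alpha t ^+ 2 * \sum_(j < n)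
        (dotv (gradxL df dg j (x j t) (lam j t)) (gradxL df dg j (x j t) (lam j t))
       + dotv (gradlamL g eta (x j t) (lam j t)) (gradlamL g eta (x j t) (lam j t))).
  elim=> [|T' IH]; first by rewrite !big_ord0; lra.
  rewrite !big_ord_recr /=.
  have := Hstep T'; lra.
set A := \sum_(t < T) alpha t.
have An0 : A != 0 by rewrite lt0r_neq0.
have HnP : (0 < n)%N by apply: (leq_ltn_trans (leq0n i) (ltn_ord i)).
have HN : 0 < n%:R :> R by rewrite ltr0n.
pose xh := xhat alpha x i T.
have Hxh : xh = \sum_(t < T) (A^-1 * alpha t) *: x i t.
  by rewrite /xh /xhat scaler_sumr; apply: eq_bigr => t _; rewrite scalerA.
have Hw0 : forall t : 'I_T, 0 <= A^-1 * alpha t.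
  by move=> t; apply: mulr_ge0 => //; rewrite invr_ge0 ltW.
have Hw1 : \sum_(t < T) A^-1 * alpha t = 1 by rewrite -mulr_sumr mulVf.
have Hxhb : eball Rad xh.
  rewrite /eball /= ball_sq // Hxh.
  apply: le_trans (vec_jensen _ Hw0 Hw1) _.
  apply: (le_trans (y := \sum_(t < T) A^-1 * alpha t * Rad ^+ 2)).
    apply: ler_sum => t _; apply: ler_wpM2l => //.
    by rewrite -ball_sq //; apply: Hxb.
  by rewrite -mulr_suml Hw1 mul1r.
have HJ : forall j, A * (f j xh - f j xstar) <=
    \sum_(t < T) alpha t * (f j (x i t) - f j xstar).
  move=> j.
  have Ht : forall t : 'I_T, alpha t * (f j xh - f j xstar)
      + alpha t * dotv (df j xh) (x i t - xh) <= alpha t * (f j (x i t) - f j xstar).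
    move=> t; have h := Hdf j xh Hxhb (x i t).
    rewrite -mulrDr; apply: ler_wpM2l => //; lra.
  have S := ler_sum (index_enum 'I_T) (P := xpredT) (fun t _ => Ht t).
  rewrite big_split /= -mulr_suml -/A in S.
  have E0 : \sum_(t < T) alpha t * dotv (df j xh) (x i t - xh) = 0.
    transitivity (dotv (df j xh) (\sum_(t < T) alpha t *: (x i t - xh))).
      by rewrite dotv_sumr; apply: eq_bigr => t _; rewrite dotvZr.
    have -> : \sum_(t < T) alpha t *: (x i t - xh) = 0.
      under eq_bigr do rewrite scalerBr.
      by rewrite sumrB -scaler_suml -/A /xh /xhat scalerA mulfV // scale1r subrr.
    exact: dotv0r.
  rewrite E0 in S; lra.
have HJ2 : A * (\sum_(j < n) f j xh - \sum_(j < n) f j xstar) <=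
    \sum_(t < T) alpha t * \sum_(j < n) (f j (x i t) - f j xstar).
  rewrite -sumrB mulr_sumr.
  apply: le_trans (ler_sum (index_enum 'I_n) (P := xpredT) (fun j _ => HJ j)) _.
  rewrite exchange_big /= le_eqVlt; apply/orP; left; apply/eqP.
  by apply: eq_bigr => t _; rewrite mulr_sumr.
have Hh : \sum_(t < T) alpha t * \sum_(j < n) (f j (x i t) - f j xstar) <=
    \sum_(t < T) alpha t * \sum_(j < n) (f j (x j t) - f j xstar)
    + L * \sum_(t < T) \sum_(j < n) alpha t * enorm (x i t - x j t).
  rewrite mulr_sumr -big_split /=; apply: ler_sum => t _.
  rewrite !mulr_sumr -!big_split /=; apply: ler_sum => j _.
  have h := Hdf j (x i t) (Hxb i t) (x j t).
  have hL := HfL j _ _ (Hxb i t) (Hdf j (x i t) (Hxb i t)).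
  have hC := CS (df j (x i t)) (x i t - x j t).
  have he := enorm_ge0 (x i t - x j t).
  rewrite -opprB dotvNr in h.
  have h2 : enorm (df j (x i t)) * enorm (x i t - x j t) <= L * enorm (x i t - x j t).
    by apply: ler_wpM2r.
  have h3 : f j (x i t) - f j (x j t) <= L * enorm (x i t - x j t) by lra.
  have Ha := Halpha0 t.
  have : 0 <= alpha t * (L * enorm (x i t - x j t) - (f j (x i t) - f j (x j t))).
    by apply: mulr_ge0 => //; lra.
  nra.
have Ht := Htel T.
have HD0 : Dt 0%N = n%:R * dotv xstar xstar.
  have -> : Dt 0%N = \sum_(j < n) dotv xstar xstar.
    by apply: eq_bigr => j _; rewrite Hx0 Hlam0 dotv0l sub0r dotvNl dotvNr opprK addr0.
  by rewrite sumr_const cardT size_enum_ord mulr_natl.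
have HDT : 0 <= Dt T by apply: sumr_ge0 => j _; apply: addr_ge0; apply: sq_ge0.
have HQ : 0 <= \sum_(t < T) alpha t * \sum_(j < n) dotv (lam j t) (lam j t).
  apply: sumr_ge0 => t _; apply: mulr_ge0 => //; apply: sumr_ge0 => j _; apply: sq_ge0.
have eS2 : \sum_(t < T) \sum_(j < n) alpha t * enorm (lam j t) ^+ 2 =
    \sum_(t < T) alpha t * \sum_(j < n) dotv (lam j t) (lam j t).
  by apply: eq_bigr => t _; rewrite mulr_sumr; apply: eq_bigr => j _; rewrite enorm_sq.
have eS3 : \sum_(t < T) \sum_(j < n) alpha t ^+ 2 *
      (enorm (gradxL df dg j (x j t) (lam j t)) ^+ 2
       + enorm (gradlamL g eta (x j t) (lam j t)) ^+ 2) =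
    \sum_(t < T) alpha t ^+ 2 * \sum_(j < n)
        (dotv (gradxL df dg j (x j t) (lam j t)) (gradxL df dg j (x j t) (lam j t))
       + dotv (gradlamL g eta (x j t) (lam j t)) (gradlamL g eta (x j t) (lam j t))).
  by apply: eq_bigr => t _; rewrite mulr_sumr; apply: eq_bigr => j _; rewrite !enorm_sq.
rewrite eS2 eS3 enorm_sq /favg -/xh.
rewrite HD0 in Ht.
move: HJ2 Hh Ht HDT HQ.
set Xh := \sum_(j < n) f j xh; set Xs := \sum_(j < n) f j xstar.
set Fi := \sum_(t < T) alpha t * \sum_(j < n) (f j (x i t) - f j xstar).
set P := \sum_(t < T) alpha t * \sum_(j < n) (f j (x j t) - f j xstar).
set S1 := \sum_(t < T) \sum_(j < n) alpha t * enorm (x i t - x j t).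
set Q := \sum_(t < T) alpha t * \sum_(j < n) dotv (lam j t) (lam j t).
set S3 := \sum_(t < T) alpha t ^+ 2 * _.
set sx := dotv xstar xstar.
move=> h1 h2 h3 h4 h5.
have h6 : 0 <= eta * Q by apply: mulr_ge0 => //; apply: ltW.
have key : A * (Xh - Xs) <= n%:R * 2^-1 * sx + L * S1 - eta / 2 * Q + 2^-1 * S3 by lra.
have HA : 0 < A by [].
rewrite ler_pdivlMl //.
have -> : 2^-1 * sx + L / n%:R * S1 - eta / (2 * n%:R) * Q + (2 * n%:R)^-1 * S3
   = n%:R^-1 * (n%:R * 2^-1 * sx + L * S1 - eta / 2 * Q + 2^-1 * S3).
  by field; rewrite lt0r_neq0.
have -> : A * (n%:R^-1 * Xh - n%:R^-1 * Xs) = n%:R^-1 * (A * (Xh - Xs)) by ring.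
by rewrite ler_pM2l // invr_gt0.
Qed.
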